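(* Suppose that there exists a countably infinite partition of $\Omega$ into measurable sets of strictly positive probability. Let $E$ be a free $L^0$-module. Then $E$ is stable if and only if $E$ has finite rank.
   Context: $(\Omega,\mathcal F,\mathbb P)$ is a probability space and $L^0=L^0(\Omega,\mathcal F,\mathbb P)$ is the commutative ring of real-valued measurable functions modulo $\mathbb P$-a.e. equality; measurable sets are identified when they differ by a null set. An $L^0$-module $E$ is called stable if for every countable measurable partition $(A_k)$ of $\Omega$ and every sequence $(x_k)$ in $E$ there exists a unique $x\in E$ with $1_{A_k}x=1_{A_k}x_k$ for all $k$. A free $L^0$-module has a well-defined rank (cardinality of a basis), since $L^0$ is commutative. *)

(* Defs.v *)
From HB Require Import structures.
From mathcomp Require Import all_boot all_order all_algebra ring_quotient.
From mathcomp Require Import all_classical all_reals.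
From mathcomp Require Import all_analysis measurable_realfun.
Set Implicit Arguments. Unset Strict Implicit. Unset Printing Implicit Defensive.
Import Order.TTheory GRing.Theory Num.Theory.
Local Open Scope classical_set_scope.
Local Open Scope ring_scope.

Section L0.
Context d (T : measurableType d) (R : realType) (P : probability T R).

Definition aenull : {pred {mfun T >-> R}} :=
  fun f => `[< {ae P, forall x, f x = 0} >].

Lemma aenull_idealr_closed : idealr_closed aenull.
Proof.
split.
- by apply/asboolP; apply: aeW.
- apply/negP => /asboolP H.
  have PT : (0 < P setT)%E by rewrite probability_setT lte01.
  have [x /=] := @filter_ex _ _ (ae_properfilter_algebraOfSetsType PT) _ H.
  by move=> /eqP; rewrite oner_eq0.
- move=> a u v /asboolP Hu /asboolP Hv; apply/asboolP.
  apply: filterS2 Hu Hv => x /= hu hv.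
  change (a x * u x + v x = 0).
  by rewrite hu hv mulr0 addr0.
Qed.

HB.instance Definition _ := isIdealr.Build {mfun T >-> R} aenull
  aenull_idealr_closed.

Definition L0 : comNzRingType := {ideal_quot aenull}.

Definition L0ind (A : set T) : L0 :=
  match pselect (measurable A) with
  | left mA => (\pi_L0 (indic_mfun A mA))%qT
  | right _ => 0
  end.

(* Countable measurable partitions of Omega, indexed by nat
   (finite partitions are obtained by padding with empty sets). *)
Definition meas_partition (A : nat -> set T) : Prop :=
  [/\ forall k, measurable (A k), trivIset setT A & \bigcup_k A k = setT].

Definition stable (E : lmodType L0) : Prop :=
  forall A : nat -> set T, meas_partition A ->
  forall x : nat -> E,
    exists! y : E, forall k, L0ind (A k) *: y = L0ind (A k) *: x k.

Definition lin_indep (E : lmodType L0) (B : set E) : Prop :=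
  forall (s : seq E) (c : E -> L0), uniq s -> (forall b, b \in s -> B b) ->
    \sum_(b <- s) c b *: b = 0 -> forall b, b \in s -> c b = 0.

Definition spanning (E : lmodType L0) (B : set E) : Prop :=
  forall v : E, exists (s : seq E) (c : E -> L0),
    (forall b, b \in s -> B b) /\ v = \sum_(b <- s) c b *: b.

Definition basis (E : lmodType L0) (B : set E) : Prop :=
  lin_indep B /\ spanning B.

Definition free_module (E : lmodType L0) : Prop := exists B : set E, basis B.

(* finite rank: E has a finite basis (rank is well defined over L^0). *)
Definition finite_rank (E : lmodType L0) : Prop :=
  exists B : set E, basis B /\ finite_set B.

End L0.

(* Main.v *)
Require Import Defs.
From HB Require Import structures.
From mathcomp Require Import all_boot all_order all_algebra ring_quotient.
From mathcomp Require Import all_classical all_reals.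
From mathcomp Require Import all_analysis measurable_realfun.
Import Order.TTheory GRing.Theory Num.Theory.
Local Open Scope classical_set_scope.
Local Open Scope ring_scope.
Section S.
Context d (T : measurableType d) (R : realType) (P : probability T R).
Lemma pi0E (f : {mfun T >-> R}) : (\pi_(L0 P) f = 0)%qT <-> {ae P, forall x, f x = 0}.
Proof.
have -> : (0 : L0 P) = (\pi_(L0 P) 0)%qT by rewrite rmorph0.
split.
  move/eqquotP; rewrite /Quotient.equiv subr0 => /asboolP //.
move=> H; apply/eqquotP; rewrite /Quotient.equiv subr0; exact/asboolP.
Qed.
Lemma L0indE A (mA : measurable A) : L0ind P A = (\pi_(L0 P) (indic_mfun A mA))%qT.
Proof.
rewrite /L0ind; case: pselect => // mA'.
by rewrite (Prop_irrelevance mA' mA).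
Qed.

Lemma part_idx (A : nat -> set T) : meas_partition A ->
  forall k x, A k x -> xget 0%N [set j | A j x] = k.
Proof.
case=> _ tA _ k x Akx; apply: xget_unique => // j Ajx.
by apply: tA => //; exists x.
Qed.

Lemma glue (A : nat -> set T) : meas_partition A -> forall c : nat -> L0 P,
  exists g : L0 P, forall k, L0ind P (A k) * g = L0ind P (A k) * c k.
Proof.
move=> hA c; have [mA _ cA] := hA.
pose f k : {mfun T >-> R} := repr (c k).
pose gf x := f (xget 0%N [set j | A j x]) x.
have mg : measurable_fun setT gf.
  rewrite -cA; apply/measurable_fun_bigcup => // k.
  apply: (eq_measurable_fun (f k)).
    by move=> x /set_mem Akx; rewrite /gf (@part_idx _ hA _ _ Akx).
  exact: measurable_funS (measurable_funPT (f k)).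
have mg' : gf \in mfun.
 by rewrite inE.
exists (\pi_(L0 P) (mfun_Sub mg'))%qT => k.
rewrite -(reprK (c k)) (@L0indE _ (mA k)) -!rmorphM; congr (\pi_(L0 P) _)%qT.
apply/mfuneqP => x; rewrite !mfunM /=.
have [Akx|nAkx] := pselect (A k x).
  by rewrite /gf (@part_idx _ hA _ _ Akx).
have -> : mindic R (mA k) x = 0 by rewrite mindicE memNset.
by rewrite !mul0r.
Qed.

Lemma locz (A : nat -> set T) : meas_partition A -> forall g : L0 P,
  (forall k, L0ind P (A k) * g = 0) -> g = 0.
Proof.
move=> hA g H; have [mA _ cA] := hA.
rewrite -(reprK g); apply/pi0E.
have H' k : {ae P, forall x, (indic_mfun (A k) (mA k) * repr g) x = 0}.
  apply/pi0E; rewrite rmorphM /= -(@L0indE _ (mA k)) reprK; exact: H.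
apply: filterS (ae_foralln H') => x Hx.
have : (\bigcup_k A k) x by rewrite cA.
case=> k _ Akx; move: (Hx k); rewrite mfunM /= mindicE mem_set //.
by rewrite mul1r.
Qed.

Lemma indN0 (A : set T) : measurable A -> (0 < P A)%E -> L0ind P A <> 0.
Proof.
move=> mA PA; rewrite (@L0indE _ mA) => /pi0E H.
have : P.-negligible A.
  apply: negligibleS H => x Ax /=; rewrite mindicE mem_set //.
  by move/eqP; rewrite oner_eq0.
move/(negligibleP _ mA) => P0; by rewrite P0 ltxx in PA.
Qed.

Section M.
Variable E : lmodType (L0 P).

Lemma sum_delta (t : seq E) (b0 : E) (r : L0 P) : uniq t -> b0 \in t ->
  \sum_(b <- t) (if b == b0 then r else 0) *: b = r *: b0.
Proof.
move=> ut bt; rewrite (bigD1_seq b0) //= eqxx big1 ?addr0 // => b /negbTE ->.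
exact: scale0r.
Qed.

Lemma normalize (t : seq E) : uniq t -> forall (s : seq E) (c : E -> L0 P),
  {subset s <= t} ->
  exists a : E -> L0 P, \sum_(b <- s) c b *: b = \sum_(b <- t) a b *: b
    /\ (forall b, b \notin s -> a b = 0).
Proof.
move=> ut; elim=> [|b s IH] c sub.
  exists (fun _ => 0); split; last by [].
  by rewrite big_nil big1 // => b _; rewrite scale0r.
have [a [Ha Ha0]] : exists a : E -> L0 P, \sum_(b <- s) c b *: b = \sum_(b <- t) a b *: b
    /\ (forall b, b \notin s -> a b = 0).
  by apply: IH => x hx; apply: sub; rewrite in_cons hx orbT.
exists (fun b' => a b' + (if b' == b then c b else 0)); split.
  rewrite big_cons Ha.
  transitivity (\sum_(i <- t) (a i *: i + (if i == b then c b else 0) *: i)); last first.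
    by apply: eq_bigr => i _; rewrite scalerDl.
  rewrite big_split /= (@sum_delta t b (c b) ut (sub b (mem_head _ _))).
  by rewrite addrC.
move=> b'; rewrite in_cons negb_or => /andP[/negbTE -> nb].
by rewrite Ha0 // addr0.
Qed.

Lemma rep_t (B : set E) (t : seq E) : spanning B -> uniq t ->
  (forall b, B b -> b \in t) ->
  forall v, exists a : E -> L0 P, v = \sum_(b <- t) a b *: b.
Proof.
move=> sp ut Bt v; have [s [c [sB ->]]] := sp v.
have [a [Ha _]] := @normalize t ut s c (fun x hx => Bt x (sB x hx)).
by exists a.
Qed.

Lemma fin_stable (B : set E) : Defs.basis B -> finite_set B -> stable E.
Proof.
move=> [li sp] /finite_seqP [s0 Bs0].
pose t := undup s0.
have ut : uniq t := undup_uniq s0.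
have Bt b : B b -> b \in t.
  by rewrite mem_undup Bs0 /= => h; exact: h.
have tB b : b \in t -> B b.
  by rewrite mem_undup Bs0 /= => h; exact: h.
move=> A hA x.
have /choice [a Ha] : forall k, exists a : E -> L0 P, x k = \sum_(b <- t) a b *: b.
  by move=> k; exact: rep_t.
have /choice [g Hg] : forall b : E, exists g : L0 P,
    forall k, L0ind P (A k) * g = L0ind P (A k) * a k b.
  by move=> b; exact: (glue _ hA (fun k => a k b)).
have hex : forall k, L0ind P (A k) *: \sum_(b <- t) g b *: b = L0ind P (A k) *: x k.
  move=> k; rewrite Ha !scaler_sumr; apply: eq_bigr => b _.
  by rewrite !scalerA Hg.
exists (\sum_(b <- t) g b *: b); split; first exact: hex.
move=> y' Hy'.
pose z := y' - \sum_(b <- t) g b *: b.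
have Hz k : L0ind P (A k) *: z = 0 by rewrite scalerBr Hy' hex subrr.
have [e He] := @rep_t B t sp ut Bt z.
have e0 b : b \in t -> e b = 0.
  move=> bt; apply: (locz _ hA) => k.
  apply: (li t (fun b => L0ind P (A k) * e b)) => //.
  transitivity (L0ind P (A k) *: z); last exact: Hz k.
  rewrite He scaler_sumr; apply: eq_bigr => b' _.
  by rewrite scalerA.
have : z = 0.
  rewrite He big1_seq // => b /andP[_ bt]; by rewrite e0 // scale0r.
by move/eqP; rewrite subr_eq0 => /eqP ->.
Qed.


Lemma stable_fin (B : set E) :
  (exists A : nat -> set T, meas_partition A /\ forall k, (0 < P (A k))%E) ->
  stable E -> Defs.basis B -> finite_set B.
Proof.
move=> [A [hA PA]] st [li sp].
apply: contrapT => infB.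
have /choice [nx Hnx] : forall s : seq E, exists b, B b /\ b \notin s.
  move=> s; apply: contrapT => H; apply: infB.
  apply: (sub_finite_set _ (finite_seq s)) => b Bb /=.
  apply: contrapT => bs; apply: H; exists b; split => //; exact/negP.
pose bs := fix bs n := if n is n'.+1 then nx (bs n') :: bs n' else [::].
pose bb n := nx (bs n).
have bsE n : bs n.+1 = bb n :: bs n by [].
have ubs n : uniq (bs n).
  elim: n => // n IH; rewrite bsE /= IH andbT; exact: (Hnx _).2.
have sbs n : size (bs n) = n by elim: n => // n IH; rewrite bsE /= IH.
have Bbs n e : e \in bs n -> B e.
  elim: n => // n IH; rewrite bsE in_cons => /orP[/eqP->|/IH //].
  exact: (Hnx _).1.
have bsb n e : e \in bs n -> exists j, e = bb j.
  elim: n => // n IH; rewrite bsE in_cons => /orP[/eqP->|/IH //].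
  by exists n.
have [y [Hy _]] := st A hA bb.
have [s [c [sB ys]]] := sp y.
have [k bk] : exists k, bb k \notin s.
  apply: contrapT => H.
  have sub : {subset bs (size s).+1 <= s}.
    move=> e /bsb [j ->]; apply: contrapT => nj; apply: H; exists j; exact/negP.
  by have := uniq_leq_size (ubs _) sub; rewrite sbs ltnn.
have ut : uniq (bb k :: undup s) by rewrite /= mem_undup bk undup_uniq.
have [a [Ha Ha0]] := @normalize (bb k :: undup s) ut s c
   (fun x hx => introT idP (etrans (in_cons _ _ _) (introT orP (or_intror (etrans (mem_undup _ _) hx))))).
have ak : a (bb k) = 0 := Ha0 _ bk.
pose Ak := L0ind P (A k).
have Hk : Ak *: y = Ak *: bb k := Hy k.
have H0 : \sum_(e <- bb k :: undup s) (Ak * a e - (if e == bb k then Ak else 0)) *: e = 0.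
  transitivity (\sum_(e <- bb k :: undup s) (Ak * a e) *: e -
      \sum_(e <- bb k :: undup s) (if e == bb k then Ak else 0) *: e).
    rewrite -sumrB; apply: eq_bigr => e _; exact: scalerBl.
  rewrite (@sum_delta _ _ Ak ut (mem_head _ _)) -Hk ys Ha scaler_sumr.
  apply/eqP; rewrite subr_eq0; apply/eqP; apply: eq_bigr => e _.
  by rewrite scalerA.
have Bt e : e \in bb k :: undup s -> B e.
  rewrite in_cons mem_undup => /orP[/eqP->|/sB //]; exact: (Hnx _).1.
have := li _ _ ut Bt H0 (bb k) (mem_head _ _).
rewrite ak mulr0 eqxx sub0r => /eqP; rewrite oppr_eq0 => /eqP.
have [mA _ _] := hA.
exact: (indN0 _ (mA k) (PA k)).
Qed.

End M.
End S.

Theorem proposition3p2 (d : measure_display) (T : measurableType d)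
  (R : realType) (P : probability T R) :
  (exists A : nat -> set T, meas_partition A /\ forall k, (0 < P (A k))%E) ->
  forall E : lmodType (L0 P), free_module E ->
  (stable E <-> finite_rank E).
Proof.
move=> hA E [B hB]; split.
  move=> st; exists B; split => //; exact: stable_fin hA st hB.
by move=> [B' [hB' fB']]; exact: fin_stable hB' fB'.
Qed.
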